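(* Let $(P_n)_{n\ge 0}$ be the Catalan-Larcombe-French numbers. Then for every prime $p$ and all positive integers $m$ and $r$, $$P_{mp^r}\equiv P_{mp^{r-1}}\pmod{p^r}.$$
   Context: The Catalan-Larcombe-French numbers are defined by $P_0=1$, $P_1=8$ and, for $n\ge 2$, $n^2P_n-8(3n^2-3n+1)P_{n-1}+128(n-1)^2P_{n-2}=0$. Equivalently, $P_n=2^n\sum_{i=0}^{\lfloor n/2\rfloor}(-4)^i\binom{2(n-i)}{n-i}^2\binom{n-i}{i}$ for $n\ge 0$. The first values are $1,8,80,896,10816,137728$. *)

(* Defs.v *)
From mathcomp Require Import all_boot all_order all_algebra.
Set Implicit Arguments. Unset Strict Implicit. Unset Printing Implicit Defensive.
Import Order.TTheory GRing.Theory Num.Theory.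
Local Open Scope ring_scope.

Definition CLF (n : nat) : int :=
  2 ^+ n * \sum_(0 <= i < (n./2).+1)
     (-4) ^+ i * ('C((n - i).*2, n - i) ^ 2 * 'C(n - i, i))%N%:Z.

(* Main.v *)
Require Import Defs.
From mathcomp Require Import all_boot all_order all_algebra.
From mathcomp Require Import ring zify.
Set Implicit Arguments. Unset Strict Implicit. Unset Printing Implicit Defensive.
Import Order.TTheory GRing.Theory Num.Theory.
Local Open Scope ring_scope.

Section Cong.
Variable R : comPzRingType.
Definition cg (d a b : R) : Prop := exists z, a - b = d * z.

Lemma cg_refl d a : cg d a a.
Proof. by exists 0; rewrite subrr mulr0. Qed.
Lemma cg_sym d a b : cg d a b -> cg d b a.
Proof. by case=> z h; exists (- z); rewrite mulrN -h opprB. Qed.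
Lemma cg_trans d a b c : cg d a b -> cg d b c -> cg d a c.
Proof. by case=> z h [w h']; exists (z + w); rewrite mulrDr -h -h' addrA subrK. Qed.
Lemma cgD d a b c e : cg d a b -> cg d c e -> cg d (a + c) (b + e).
Proof. by case=> z h [w h']; exists (z + w); rewrite mulrDr -h -h'; ring. Qed.
Lemma cgN d a b : cg d a b -> cg d (- a) (- b).
Proof. by case=> z h; exists (- z); rewrite mulrN -h; ring. Qed.
Lemma cgMl d a b c : cg d a b -> cg d (c * a) (c * b).
Proof. by case=> z h; exists (c * z); rewrite mulrCA -h; ring. Qed.
Lemma cgM d a b c e : cg d a b -> cg d c e -> cg d (a * c) (b * e).
Proof.
move=> h1 h2; apply: (@cg_trans _ _ (b * c)).
  by rewrite ![_ * c]mulrC; apply: cgMl.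
exact: cgMl.
Qed.
Lemma cgX d a b n : cg d a b -> cg d (a ^+ n) (b ^+ n).
Proof.
move=> h; elim: n => [|n IH]; first exact: cg_refl.
by rewrite !exprS; apply: cgM.
Qed.
Lemma cg_dvd d e a b : cg (d * e) a b -> cg d a b.
Proof. by case=> z h; exists (e * z); rewrite mulrA. Qed.
Lemma cg_sum d (I : finType) (F G : I -> R) :
  (forall i, cg d (F i) (G i)) -> cg d (\sum_i F i) (\sum_i G i).
Proof.
move=> h; elim/big_ind2: _ => //; first exact: cg_refl.
by move=> *; apply: cgD.
Qed.

Lemma cg_binom (p : nat) (x y : R) : prime p ->
  cg p%:R ((x + y) ^+ p) (x ^+ p + y ^+ p).
Proof.
move=> pp; have p0 : (0 < p)%N by apply: prime_gt0.
rewrite exprDn.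
case: p pp p0 => // p pp _.
rewrite big_ord_recr big_ord_recl /= subn0 subnn !expr0 mulr1 mul1r ?bin0 ?binn ?mulr1n.


exists (\sum_(i < p) x ^+ (p.+1 - (bump 0 i)) * y ^+ (bump 0 i) *+ ('C(p.+1, bump 0 i) %/ p.+1)).
rewrite mulr_sumr.
set S := \sum_(i < p) _.
have -> : S = \sum_(i < p) p.+1%:R * (x ^+ (p.+1 - bump 0 i) * y ^+ bump 0 i *+ ('C(p.+1, bump 0 i) %/ p.+1)).
  apply: eq_bigr => i _.
  rewrite mulr_natl -mulrnA divnK //; apply: prime_dvd_bin => //.
  by rewrite /bump /= add1n ltnS ltn_ord.
rewrite -/S; ring.
Qed.
End Cong.

Lemma cg_fermat_nat (p : nat) (c : nat) : prime p -> cg (p%:R : int) (c%:Z ^+ p) c%:Z.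
Proof.
move=> pp; have p0 : (0 < p)%N by apply: prime_gt0.
elim: c => [|c IH]; first by rewrite expr0n eqn0Ngt p0; apply: cg_refl.
rewrite -addn1 PoszD; apply: cg_trans (cg_binom _ _ pp) _.
by apply: cgD => //; rewrite expr1n; apply: cg_refl.
Qed.

Lemma cg_fermat (p : nat) (c : int) : prime p -> cg (p%:R : int) (c ^+ p) c.
Proof.
move=> pp; have p0 : (0 < p)%N by apply: prime_gt0.
case: c => n; first exact: cg_fermat_nat.
set x := (n.+1)%:Z.
have -> : Negz n = - x by rewrite NegzE.
have h := cg_binom x (- x) pp.
rewrite subrr expr0n eqn0Ngt p0 /= in h.
have hx := cg_fermat_nat n.+1 pp.
case: h => z h; case: hx => w hw.
exists (- z - w).
rewrite -/x in hw.
have e : (- x) ^+ p = - (p%:R * z) - x ^+ p by rewrite -h; ring.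
rewrite e.
have e2 : x ^+ p = p%:R * w + x by rewrite -hw; ring.
rewrite e2; ring.
Qed.

Lemma cg_lift (R : comPzRingType) (p k : nat) (a b : R) : (0 < k)%N ->
  cg (p ^ k)%:R a b -> cg (p ^ k.+1)%:R (a ^+ p) (b ^+ p).
Proof.
case: k => // k _ hab.
have hs : cg (p ^ k.+1)%:R (\sum_(i < p) a ^+ (p.-1 - i) * b ^+ i)
                           (\sum_(i < p) b ^+ (p.-1 - i) * b ^+ i).
  by apply: cg_sum => i; apply: cgM; [apply: cgX|apply: cg_refl].
have e0 : \sum_(i < p) b ^+ (p.-1 - i) * b ^+ i = p%:R * b ^+ p.-1.
  rewrite (eq_bigr (fun _ => b ^+ p.-1)); last first.
    move=> i _; rewrite -exprD subnK //.
    by rewrite -ltnS (ltn_predK (ltn_ord i)).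
  by rewrite sumr_const card_ord mulr_natl.
rewrite e0 in hs.
case: hab => z hz; case: hs => w hw.
have e : \sum_(i < p) a ^+ (p.-1 - i) * b ^+ i = p%:R * b ^+ p.-1 + (p ^ k.+1)%:R * w
  by rewrite -hw; ring.
exists (z * b ^+ p.-1 + (p ^ k)%:R * z * w).
rewrite subrXX hz e.
rewrite !natrX !exprS; ring.
Qed.

Lemma cg_iter (R : comPzRingType) (p r : nat) (a b : R) :
  cg p%:R a b -> cg (p ^ r.+1)%:R (a ^+ (p ^ r)) (b ^+ (p ^ r)).
Proof.
move=> h; elim: r => [|r IH]; first by rewrite expn0 expn1 !expr1.
rewrite [(p ^ r.+1)%N]expnSr !exprM; exact: cg_lift.
Qed.

Lemma cg_polyC (d : nat) (a b : int) : cg d%:R a b -> cg (d%:R : {poly int}) a%:P b%:P.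
Proof.
case=> z h; exists z%:P.
by rewrite -polyCB h polyCM polyC_natr.
Qed.

Lemma cg_coef (d : nat) (P Q : {poly int}) i :
  cg (d%:R : {poly int}) P Q -> cg (d%:R : int) P`_i Q`_i.
Proof.
case=> z h; exists z`_i.
by rewrite -coefB h mulr_natl coefMn mulr_natl.
Qed.

Lemma frob (p : nat) (q : {poly int}) : prime p ->
  cg (p%:R : {poly int}) (q ^+ p) (q \Po 'X^p).
Proof.
move=> pp; have p0 : (0 < p)%N by apply: prime_gt0.
elim/poly_ind: q => [|q c IH].
  by rewrite expr0n eqn0Ngt p0 comp_poly0; apply: cg_refl.
apply: cg_trans (cg_binom _ _ pp) _.
rewrite comp_poly_MXaddC; apply: cgD.
  by rewrite exprMn; apply: cgM => //; apply: cg_refl.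
by rewrite -(rmorphXn (@polyC int)); apply: cg_polyC; apply: cg_fermat.
Qed.

Lemma gauss_poly (p r m : nat) (q : {poly int}) : prime p ->
  cg ((p ^ r.+1)%:R : {poly int}) (q ^+ (m * p ^ r.+1)) ((q ^+ (m * p ^ r)) \Po 'X^p).
Proof.
move=> pp.
have h := cg_iter r (frob q pp).
have -> : (m * p ^ r.+1 = p * p ^ r * m)%N by rewrite expnS mulnC.
rewrite (mulnC m (p ^ r)%N) !exprM !(rmorphXn (comp_poly 'X^p)).
exact: cgX.
Qed.

Lemma coefX1n (n j : nat) : ((1 + 'X : {poly int}) ^+ n)`_j = 'C(n, j)%:R.
Proof.
elim: n j => [|n IH] j; first by rewrite expr0 coef1 bin0n; case: (j == 0%N).
rewrite exprSr mulrDr mulr1 coefD coefMX IH.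
case: j => [|j]; first by rewrite !bin0 addr0.
by rewrite IH /= binS natrD addrC.
Qed.

Definition Apol : {poly int} := 1 + 'X^2.

Lemma Apol_comp : Apol = (1 + 'X) \Po 'X^2.
Proof. by rewrite comp_polyD comp_polyC comp_polyX. Qed.

Lemma coefAn (n : nat) : (Apol ^+ n)`_n = (if odd n then 0 else 'C(n, n./2))%:R.
Proof.
rewrite Apol_comp -(rmorphXn (comp_poly 'X^2)) /= coef_comp_poly_Xn //.
by rewrite dvdn2 divn2 coefX1n; case: (odd n).
Qed.

Lemma size_Apol : size Apol = 3%N.
Proof. by rewrite /Apol addrC -polyC1 size_XnaddC. Qed.

Lemma size_Apoln (n : nat) : (size (Apol ^+ n) <= (2 * n).+1)%N.
Proof.
have := size_exp Apol n; rewrite size_Apol /= => e.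
by rewrite -e leqSpred.
Qed.

Lemma kron (K a b : nat) (P B : {poly int}) : (a < K)%N ->
  (forall i, (K <= i)%N -> P`_i = 0) ->
  (P * (B \Po 'X^K))`_(a + K * b) = P`_a * B`_b.
Proof.
move=> aK hP; elim/poly_ind: B b => [|B c IH] b.
  by rewrite comp_poly0 mulr0 !coef0 mulr0.
rewrite comp_poly_MXaddC mulrDr mulrA coefD coefMXn coefMC.
rewrite coefD coefMX coefC.
case: b => [|b].
  by rewrite muln0 addn0 aK eqxx !add0r.
rewrite /= ltnNge (leq_trans (leq_addl a K)) ?leq_add2l ?leq_pmulr //=.
have -> : (a + K * b.+1 - K = a + K * b)%N by rewrite mulnS addnCA addKn.
rewrite IH (hP (a + K * b.+1)%N) ?mul0r ?addr0 //.
nia.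
Qed.

Definition qK (K : nat) : {poly int} := 4%:P * 'X^(K.+1) + Apol * (Apol \Po 'X^K).
Definition ak (k : nat) : nat := if odd k then 0%N else ('C(k, k./2) ^ 2)%N.
Definition Sint (n : nat) : int := \sum_(k < n.+1) ('C(n, k) * 4 ^ (n - k) * ak k)%N%:Z.

Lemma qK_coef (K n : nat) : (2 * n < K)%N -> ((qK K) ^+ n)`_(n * K.+1) = Sint n.
Proof.
move=> hK; rewrite /qK exprDn coef_sum /Sint; apply: eq_bigr => i _.
have hi : (i <= n)%N by rewrite -ltnS.
rewrite coefMn !exprMn -exprM -(rmorphXn (comp_poly 'X^K)) /=.
rewrite -(rmorphXn (@polyC int)) /= -!mulrA coefCM coefXnM.
rewrite ifF; last by apply/negbTE; rewrite -leqNgt; nia.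
have -> : (n * K.+1 - K.+1 * (n - i) = i + K * i)%N by nia.
rewrite kron; first last.
- move=> j hj; apply: nth_default; apply: leq_trans (size_Apoln i) _; nia.
- nia.
rewrite coefAn -natz !natrM !natrX /ak.
case: (odd i) => /=; first by rewrite !mulr0 mul0rn.
by rewrite natrX -mulr_natl; ring.
Qed.

Lemma Sint_gauss (p r m : nat) : prime p ->
  cg ((p ^ r.+1)%:R : int) (Sint (m * p ^ r.+1)) (Sint (m * p ^ r)).
Proof.
move=> pp; have p0 : (0 < p)%N by apply: prime_gt0.
set N := (m * p ^ r.+1)%N; set M := (m * p ^ r)%N.
have eN : N = (M * p)%N by rewrite /N /M expnSr mulnA.
set K := (2 * N).+1.
have hN : (2 * N < K)%N by [].
have hM : (2 * M < K)%N.
  by rewrite /K ltnS leq_mul2l /= eN leq_pmulr.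
rewrite -(qK_coef hN) -(qK_coef hM).
have h := cg_coef (N * K.+1) (gauss_poly r m (qK K) pp).
rewrite -/N -/M coef_comp_poly_Xn // in h.
have e2 : (N * K.+1 = M * K.+1 * p)%N by rewrite eN mulnAC.
by rewrite e2 dvdn_mull // mulnK // -e2 in h.
Qed.

Lemma natS (n : nat) : (n.+1)%:R = n%:R + 1 :> rat.
Proof. by rewrite -addn1 natrD. Qed.

Lemma binL (m k : nat) : (k%:R + 1) * ('C(m, k.+1))%:R = (m%:R - k%:R) * ('C(m, k))%:R :> rat.
Proof.
have [h|h] := leqP k m.
  by rewrite -natS -(natrB _ h) -!natrM mul_bin_left.
by rewrite (bin_small h) (bin_small (leqW h)) !mulr0.
Qed.

Lemma binD (m k : nat) : (k%:R + 1) * ('C(m.+1, k.+1))%:R = (m%:R + 1) * ('C(m, k))%:R :> rat.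
Proof. rewrite -!natS -!natrM.
have := mul_bin_diag m.+1 k; simpl; by move=> ->.
Qed.

Lemma binPS (m k : nat) : ('C(m.+1, k.+1))%:R = ('C(m, k))%:R + ('C(m, k.+1))%:R :> rat.
Proof. by rewrite binS natrD addrC. Qed.

Lemma cent (j : nat) : (j%:R + 1) * ('C(j.*2.+2, j.+1))%:R = 2 * (2 * j%:R + 1) * ('C(j.*2, j))%:R :> rat.
Proof.
rewrite binPS.
have -> : 'C(j.*2.+1, j) = 'C(j.*2.+1, j.+1).
  by rewrite -bin_sub; [congr 'C(_, _)|]; rewrite -addnn; lia.
have := binD j.*2 j; rewrite -muln2 natrM => e.
rewrite mulrDr e; ring.
Qed.

Definition D (j : nat) : nat := ('C(j.*2, j) ^ 2)%N.

Lemma D_rec (j : nat) : (j%:R + 1) ^+ 2 * (D j.+1)%:R = 4 * (2 * j%:R + 1) ^+ 2 * (D j)%:R :> rat.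
Proof.
rewrite /D !natrX doubleS -exprMn cent; ring.
Qed.

Lemma ak_rec (k : nat) : (k%:R + 2) ^+ 2 * (ak k.+2)%:R = 16 * (k%:R + 1) ^+ 2 * (ak k)%:R :> rat.
Proof.
rewrite /ak /= negbK; case: ifP => ho; first by rewrite !mulr0.
have ek := odd_double_half k; rewrite ho add0n in ek.
set j := k./2 in ek *; rewrite -ek.
have e2 : (j.*2)%:R = 2 * j%:R :> rat by rewrite -muln2 natrM mulrC.
rewrite !natrX e2.
have e := cent j.
set c := ('C(j.*2.+2, j.+1))%:R in e *.
have -> : (2 * j%:R + 2) ^+ 2 * c ^+ 2 = (2 * ((j%:R + 1) * c)) ^+ 2 by ring.
rewrite e; ring.
Qed.


Definition tt (n j : nat) : rat :=
  if (j <= n)%N then (-4) ^+ (n - j) * ('C(j, n - j) * D j)%:R else 0.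

Definition Gt (n j : nat) : rat := - (n%:R + 2) * j%:R * tt n.+2 j.

Lemma ttE n j : (j <= n)%N -> tt n j = (-4) ^+ (n - j) * ('C(j, n - j))%:R * (D j)%:R.
Proof. by move=> h; rewrite /tt h natrM mulrA. Qed.

Lemma ttZ n j : (n < j)%N -> tt n j = 0.
Proof. by move=> h; rewrite /tt leqNgt h. Qed.

Lemma nz1 (m : nat) : m%:R + 1 != 0 :> rat.
Proof. by rewrite -natS pnatr_eq0. Qed.
Lemma nz2 (m : nat) : m%:R + 2 != 0 :> rat.
Proof. by have := nz1 m.+1; rewrite natS -addrA. Qed.

Lemma Dnext (j : nat) : (D j.+1)%:R = 4 * (2 * j%:R + 1) ^+ 2 * (D j)%:R / (j%:R + 1) ^+ 2 :> rat.
Proof. by rewrite -D_rec; field; rewrite nz1. Qed.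

Lemma T_step n j :
  (n%:R + 2) ^+ 2 * tt n.+2 j - 4 * (3 * n%:R ^+ 2 + 9 * n%:R + 7) * tt n.+1 j
  + 32 * (n%:R + 1) ^+ 2 * tt n j = Gt n j.+1 - Gt n j.
Proof.
rewrite /Gt.
have [hj|hj] := leqP j n.
  have [k ek] : exists k, n = (j + k)%N by exists (n - j)%N; rewrite subnKC.
  rewrite ek !ttE; try lia.
  have -> : ((j + k).+2 - j = k.+2)%N by lia.
  have -> : ((j + k).+1 - j = k.+1)%N by lia.
  have -> : ((j + k) - j = k)%N by lia.
  have -> : ((j + k).+2 - j.+1 = k.+1)%N by lia.
  have c1 : ('C(j, k.+1))%:R = (j%:R - k%:R) * ('C(j, k))%:R / (k%:R + 1) :> rat.
    by rewrite -binL; field; rewrite -natS pnatr_eq0.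
  have c2 : ('C(j, k.+2))%:R = (j%:R - (k%:R + 1)) * ('C(j, k.+1))%:R / (k%:R + 2) :> rat.
    rewrite -natS -binL natS; field.
    by have := pnatr_eq0 rat k.+2; rewrite !natS -addrA -[1 + 1]/(2 : rat) => ->.
  have c3 : ('C(j.+1, k.+1))%:R = (j%:R + 1) * ('C(j, k))%:R / (k%:R + 1) :> rat.
    by rewrite -binD; field; rewrite -natS pnatr_eq0.
  have d1 : (D j.+1)%:R = 4 * (2 * j%:R + 1) ^+ 2 * (D j)%:R / (j%:R + 1) ^+ 2 :> rat.
    by rewrite -D_rec; field; rewrite nz1.
  rewrite c2 c1 c3 d1 !natrD !natS !exprS !expr0.
  by field; rewrite !nz1 !nz2.
move: hj; rewrite leq_eqVlt => /orP[/eqP <-|hj].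
  rewrite (ttZ (ltnSn n)) ttE // ttE // subSn // subnn ttE // subnn.
  rewrite bin1 bin0 (Dnext n.+1) (Dnext n) !natS !expr0 expr1.
  by field; rewrite nz1 -addrA nz2.
move: hj; rewrite leq_eqVlt => /orP[/eqP <-|hj].
  rewrite (ttZ (ltnSn n.+1)) (ttZ (ltnW (ltnSn n.+1))) (ttZ (ltnSn n.+2)) ttE // subnn bin0 expr0.
  by rewrite !mulr0 mul1r; ring.
rewrite !ttZ //; try lia.
rewrite !mulr0; ring.
Qed.

Lemma binR (m k : nat) : (m%:R + 1) * ('C(m, k))%:R = (m%:R + 1 - k%:R) * ('C(m.+1, k))%:R :> rat.
Proof.
have [h|h] := leqP k m.+1.
  by rewrite -natS -(natrB _ h) -!natrM -mul_bin_down.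
by rewrite (bin_small h) (bin_small (ltnW h)) !mulr0.
Qed.

Definition sf (n k : nat) : rat := ('C(n, k) * 4 ^ (n - k) * ak k)%N%:R.
Definition gS (n k : nat) : rat := -4 * (k%:R + 1) * (n%:R + 1 - k%:R) * sf n.+1 k.
Definition gS' (n k : nat) : rat := if k is k'.+2 then gS n k' else 0.

Lemma four_nz (k : nat) : (4 : rat) ^+ k != 0.
Proof. by rewrite expf_neq0. Qed.

Lemma sfE m k : sf m k = ('C(m, k))%:R * 4 ^+ m * (ak k)%:R / 4 ^+ k.
Proof.
rewrite /sf; have [h|h] := leqP k m.
  rewrite !natrM natrX -[in 4 ^+ m](subnK h) exprD; field; exact: four_nz.
by rewrite (bin_small h) !mul0n !mul0r.
Qed.

Lemma S_step n k :
  (n%:R + 2) ^+ 2 * sf n.+2 k - 4 * (3 * n%:R ^+ 2 + 9 * n%:R + 7) * sf n.+1 k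
  + 32 * (n%:R + 1) ^+ 2 * sf n k = gS n k - gS' n k.
Proof.
rewrite /gS' /gS.
case: k => [|[|k]].
- by rewrite !sfE /ak /= !bin0 !exprS !expr0; field.
- have z : forall m, sf m 1 = 0 by move=> m; rewrite /sf (_ : ak 1 = 0%N) // muln0.
  by rewrite !z !mulr0 subrr; ring.
rewrite !sfE.
have a2 : (ak k.+2)%:R = 16 * (k%:R + 1) ^+ 2 * (ak k)%:R / (k%:R + 2) ^+ 2 :> rat.
  by rewrite -ak_rec; field; rewrite nz2.
have b1 : ('C(n.+2, k.+2))%:R = (n%:R + 2) * ('C(n.+1, k.+1))%:R / (k%:R + 2) :> rat.
  have := binD n.+1 k.+1; rewrite !natS -!addrA => e.
  by rewrite -e; field; rewrite nz2.
have b2 : ('C(n.+1, k.+1))%:R = (n%:R + 1) * ('C(n, k))%:R / (k%:R + 1) :> rat.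
  by rewrite -binD; field; rewrite nz1.
have b4 : ('C(n, k.+2))%:R = (n%:R - (k%:R + 1)) * ('C(n, k.+1))%:R / (k%:R + 2) :> rat.
  have := binL n k.+1; rewrite !natS -!addrA => e.
  by rewrite -e; field; rewrite nz2.
have b5 : ('C(n, k.+1))%:R = (n%:R - k%:R) * ('C(n, k))%:R / (k%:R + 1) :> rat.
  by rewrite -binL; field; rewrite nz1.
have b6 : ('C(n, k))%:R = (n%:R + 1 - k%:R) * ('C(n.+1, k))%:R / (n%:R + 1) :> rat.
  by rewrite -binR; field; rewrite nz1.
rewrite a2 b1 (binPS n k.+1) b4 b2 !b5 !b6 !natS !exprS.
have := four_nz k => f.
by field; rewrite !nz1 nz2 expf_neq0.
Qed.

Definition Trat (n : nat) : rat := \sum_(j < n.+1) tt n j.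
Definition Srat (n : nat) : rat := \sum_(k < n.+1) sf n k.
Definition Rec (a : nat -> rat) := forall n : nat,
  (n%:R + 2) ^+ 2 * a n.+2 - 4 * (3 * n%:R ^+ 2 + 9 * n%:R + 7) * a n.+1
  + 32 * (n%:R + 1) ^+ 2 * a n = 0.

Lemma Trec : Rec Trat.
Proof.
move=> n.
have e1 : Trat n.+1 = \sum_(j < n.+3) tt n.+1 j.
  by rewrite /Trat [in RHS]big_ord_recr /= ttZ // addr0.
have e0 : Trat n = \sum_(j < n.+3) tt n j.
  by rewrite /Trat [in RHS]big_ord_recr big_ord_recr /= !ttZ // !addr0.
rewrite e1 e0 /Trat !mulr_sumr -sumrB -big_split /=.
rewrite (eq_bigr (fun j : 'I_n.+3 => Gt n j.+1 - Gt n j)) => [|j _]; last exact: T_step.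
rewrite -(big_mkord xpredT (fun j => Gt n j.+1 - Gt n j)) telescope_sumr //.
by rewrite /Gt ttZ // !mulr0 mul0r subrr.
Qed.

Lemma sum2 (F g : nat -> rat) :
  (forall k, F k = g k - (if k is k'.+2 then g k' else 0)) ->
  forall N, \sum_(k < N.+2) F k = g N.+1 + g N.
Proof.
move=> hF; elim=> [|N IH].
  by rewrite !big_ord_recr big_ord0 /= !hF /=; ring.
by rewrite big_ord_recr /= IH hF; ring.
Qed.

Lemma sfZ m k : (m < k)%N -> sf m k = 0.
Proof. by move=> h; rewrite /sf bin_small. Qed.

Lemma Srec : Rec Srat.
Proof.
move=> n.
have e1 : Srat n.+1 = \sum_(k < n.+3) sf n.+1 k.
  by rewrite /Srat [in RHS]big_ord_recr /= sfZ // addr0.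
have e0 : Srat n = \sum_(k < n.+3) sf n k.
  by rewrite /Srat [in RHS]big_ord_recr big_ord_recr /= !sfZ // !addr0.
rewrite e1 e0 /Srat !mulr_sumr -sumrB -big_split /=.
rewrite (eq_bigr (fun k : 'I_n.+3 => gS n k - gS' n k)) => [|k _]; last exact: S_step.
rewrite (sum2 (F := fun k => gS n k - gS' n k) (g := gS n)) //.
by rewrite /gS sfZ // mulr0 -(natS n) subrr mulr0 mul0r addr0.
Qed.

Lemma rec_uniq (a b : nat -> rat) : Rec a -> Rec b -> a 0%N = b 0%N -> a 1%N = b 1%N ->
  forall n, a n = b n.
Proof.
move=> Ra Rb h0 h1.
suff H : forall n, a n = b n /\ a n.+1 = b n.+1 by move=> n; case: (H n).
elim=> [|n [IH1 IH2]]; first by [].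
split=> //.
have hn : (n%:R + 2) ^+ 2 != 0 :> rat by rewrite expf_neq0 // nz2.
apply: (mulfI hn); apply/eqP; rewrite -subr_eq0; apply/eqP.
have ha := Ra n; have hb := Rb n.
transitivity (((n%:R + 2) ^+ 2 * a n.+2 - 4 * (3 * n%:R ^+ 2 + 9 * n%:R + 7) * a n.+1
  + 32 * (n%:R + 1) ^+ 2 * a n) - ((n%:R + 2) ^+ 2 * b n.+2 - 4 * (3 * n%:R ^+ 2 + 9 * n%:R + 7) * b n.+1
  + 32 * (n%:R + 1) ^+ 2 * b n)).
  by rewrite IH1 IH2; ring.
by rewrite ha hb subr0.
Qed.

Lemma TS : forall n, Trat n = Srat n.
Proof.
apply: rec_uniq; [exact: Trec|exact: Srec| |].
- by rewrite /Trat /Srat !big_ord_recr !big_ord0 /= /tt /sf /D /ak /= expr0 mul1r.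
- rewrite /Trat /Srat !big_ord_recr !big_ord0 /= /tt /sf /D /ak /= expr0 expr1 mul1r.
  by vm_compute.
Qed.

Lemma Sint_S n : (Sint n)%:~R = Srat n :> rat.
Proof.
rewrite /Sint /Srat rmorph_sum /=; apply: eq_bigr => k _.
by rewrite /sf.
Qed.

Lemma CLF_T n : (CLF n)%:~R = 2 ^+ n * Trat n :> rat.
Proof.
rewrite /CLF rmorphM rmorphXn /= rmorph_sum /=.
have -> : (2%:~R : rat) = 2 by [].
congr (_ * _).
rewrite /Trat -(big_mkord xpredT (tt n)) [RHS]big_nat_rev /=.
have hh : (n./2.+1 <= n.+1)%N by rewrite ltnS -divn2 leq_div.
rewrite [RHS](big_cat_nat _ (n := n./2.+1)) //=.
rewrite [X in _ = _ + X]big_nat_cond [X in _ = _ + X]big1 ?addr0; last first.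
  move=> i /andP[/andP[hi1 hi2] _].
  rewrite add0n subSS ttE ?leq_subr // bin_small ?mulr0 ?mul0r //.
  have := odd_double_half n; move: hi1 hi2; rewrite -!muln2; nia.
apply: eq_big_nat => i /andP[_ hi].
rewrite add0n subSS ttE ?leq_subr // subKn; last first.
  have := odd_double_half n; move: hi; rewrite -!muln2; nia.
have e : forall x : nat, (x%:Z)%:~R = x%:R :> rat by [].
have e4 : (-4)%:~R = -4 :> rat by [].
rewrite rmorphM rmorphXn /= e4 e !natrM; ring.
Qed.

Lemma CLF_S n : CLF n = 2 ^+ n * Sint n.
Proof.
apply: (@intr_inj rat).
rewrite CLF_T rmorphM rmorphXn /= TS -Sint_S.
by [].
Qed.

Theorem theorem3 (p m r : nat) :
  prime p -> (0 < m)%N -> (0 < r)%N ->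
  (CLF (m * p ^ r) = CLF (m * p ^ r.-1) %[mod (p ^ r)%N%:Z])%Z.
Proof.
move=> pp _; case: r => // r _ /=.
apply/eqP; rewrite eqz_mod_dvd.
suff [z ->] : cg ((p ^ r.+1)%:R : int) (CLF (m * p ^ r.+1)) (CLF (m * p ^ r)).
  by rewrite natz dvdz_mulr.
rewrite !CLF_S; apply: cgM; last exact: Sint_gauss.
have h := cgX m (cg_iter r (cg_fermat 2 pp)).
rewrite -!exprM mulnA -expnS in h.
by rewrite mulnC (mulnC m).
Qed.
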